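(* Let $p$ be a prime and $(K,|\cdot|)$ an algebraically closed ultrametric field of residue characteristic $p$. Let $q\ge1$ be an integer not divisible by $p$ and $\lambda\in K$ with $|\lambda|=1$ such that $\widetilde\lambda$ has order $q$ in $\widetilde K^*$. Let $f(z)=\lambda z+\cdots\in\mathcal{O}_K[[z]]$. (1) If $\mathrm{wideg}(f^q(z)-z)=q+1$ and $\lambda^q\ne1$, then $f$ has a unique periodic orbit in $\mathfrak{m}_K\setminus\{0\}$ of minimal period $q$, and every point $w_0$ of this orbit satisfies $|w_0|=|\lambda^q-1|^{1/q}$. (2) Let $n\ge1$ be an integer and suppose $\mathrm{wideg}\left(\frac{f^{qp^n}(z)-z}{f^{qp^{n-1}}(z)-z}\right)=qp^n$ and that every periodic point $z_0\in\mathfrak{m}_K$ of $f$ of period $qp^{n-1}$ satisfies $(f^{qp^n})'(z_0)\ne1$. Then $f$ has a unique cycle of minimal period $qp^n$, and this cycle is optimal, i.e., each of its points $z_0$ satisfies $|z_0|=\left|\frac{\lambda^{qp^n}-1}{\lambda^{qp^{n-1}}-1}\right|^{1/(qp^n)}$.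
   Context: $\mathcal{O}_K=\{|z|\le1\}$, $\mathfrak{m}_K=\{|z|<1\}$, $\widetilde K=\mathcal{O}_K/\mathfrak{m}_K$. Periodic points are taken in $\mathfrak{m}_K$. For $h\in\mathcal{O}_K[[z]]$, $\mathrm{wideg}(h)$ is the order (lowest degree of a nonzero term) of its reduction in $\widetilde K[[\zeta]]$. The power series $f^{qp^{n-1}}(z)-z$ divides $f^{qp^n}(z)-z$ in $\mathcal{O}_K[[z]]$. *)

(* Defs.v *)
From HB Require Import structures.
From mathcomp Require Import all_boot all_order all_algebra.
From mathcomp Require Import reals exp.
From Stdlib Require Import ClassicalEpsilon.
Set Implicit Arguments. Unset Strict Implicit. Unset Printing Implicit Defensive.
Import Order.TTheory GRing.Theory Num.Theory.
Local Open Scope ring_scope.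

Section Ultrametric.
Variables (R : realType) (K : fieldType) (v : K -> R).

Definition ultra_abs : Prop :=
  [/\ forall x, 0 <= v x,
      forall x, v x = 0 <-> x = 0,
      forall x y, v (x * y) = v x * v y &
      forall x y, v (x + y) <= Num.max (v x) (v y)].

Definition nontrivial_abs : Prop := exists x, 0 < v x /\ v x < 1.

Definition cvg_to (u : nat -> K) (l : K) : Prop :=
  forall e : R, 0 < e -> exists N, forall n, (N <= n)%N -> v (u n - l) < e.

Definition complete_abs : Prop :=
  forall u : nat -> K,
    (forall e : R, 0 < e -> exists N, forall m n, (N <= m)%N -> (N <= n)%N ->
        v (u m - u n) < e) ->
    exists l, cvg_to u l.

(** residue characteristic p : p = 0 in the residue field *)
Definition residue_char (p : nat) : Prop := prime p /\ v (p%:R) < 1.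

(** the reduction of lam has order q in the multiplicative group of the
    residue field *)
Definition residue_order (lam : K) (q : nat) : Prop :=
  v (lam ^+ q - 1) < 1 /\ forall k, (0 < k < q)%N -> ~ (v (lam ^+ k - 1) < 1).

Definition pser := nat -> K.

Definition ps_in_OK (a : pser) : Prop := forall n, v (a n) <= 1.

Definition psX : pser := fun n => (n == 1)%:R.
Definition ps1 : pser := fun n => (n == 0)%:R.
Definition pssub (a b : pser) : pser := fun n => a n - b n.
Definition psmul (a b : pser) : pser :=
  fun n => \sum_(i < n.+1) a i * b (n - i)%N.
Definition pspow (a : pser) (k : nat) : pser := iter k (psmul a) ps1.
(** composition g o f (meaningful when f has no constant term) *)
Definition pscomp (g f : pser) : pser :=
  fun n => \sum_(k < n.+1) g k * pspow f k n.
Definition psiter (f : pser) (m : nat) : pser := iter m (pscomp f) psX.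
Definition psderiv (a : pser) : pser := fun n => a n.+1 *+ n.+1.

(** wideg(h) = d : the reduction of h in Ktilde[[zeta]] has order exactly d *)
Definition wideg_is (h : pser) (d : nat) : Prop :=
  ~ (v (h d) < 1) /\ forall i, (i < d)%N -> v (h i) < 1.

Definition ps_eval (a : pser) (z : K) : K :=
  epsilon (inhabits 0)
    (fun l => cvg_to (fun N => \sum_(i < N) a i * z ^+ i) l).

Definition dyn (f : pser) (m : nat) (z : K) : K := iter m (ps_eval f) z.

Definition periodic_pt (f : pser) (m : nat) (z : K) : Prop :=
  v z < 1 /\ dyn f m z = z.

Definition min_period (f : pser) (m : nat) (z : K) : Prop :=
  [/\ v z < 1, (0 < m)%N, dyn f m z = z &
      forall k, (0 < k < m)%N -> dyn f k z <> z].

End Ultrametric.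

(* Main.v *)
Require Import Defs.
From HB Require Import structures.
From mathcomp Require Import all_boot all_order all_algebra.
From mathcomp Require Import reals exp.
From mathcomp Require Import ring lra zify.
From Stdlib Require Import ClassicalEpsilon FunctionalExtensionality.
Import Order.TTheory GRing.Theory Num.Theory.
Local Open Scope ring_scope.

Module A.
Set Implicit Arguments. Unset Strict Implicit. Unset Printing Implicit Defensive.

Section Real.
Variable R : realType.

Lemma bern (t : R) n : 0 <= t -> 1 + t *+ n <= (1 + t) ^+ n.
Proof.
move=> t0; elim: n => [|n IH]; first by rewrite mulr0n addr0 expr0.
rewrite exprS mulrS.
have s0 : 0 <= t *+ n by rewrite mulrn_wge0.
move: IH s0; set s := t *+ n; set X := (1 + t) ^+ n => IH s0.
nra.
Qed.

Lemma geo_small (c e : R) : 0 <= c -> c < 1 -> 0 < e -> exists n, c ^+ n < e.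
Proof.
move=> c0 c1 e0.
have [->|cn0] := eqVneq c 0; first by exists 1%N; rewrite expr1.
have cp : 0 < c by rewrite lt_def cn0.
set t := c^-1 - 1.
have tp : 0 < t by rewrite subr_gt0 invf_gt1.
pose n := Num.Def.archi_bound (e^-1 / t).
exists n.
have hb : e^-1 / t < n%:R by apply: archi_boundP; rewrite divr_ge0 // ?ltW // invr_gt0.
have : e^-1 < (c^-1) ^+ n.
  have -> : c^-1 = 1 + t by rewrite /t addrC subrK.
  apply: lt_le_trans (bern n (ltW tp)).
  rewrite ltr_pdivrMr // in hb.
  by rewrite -mulr_natl ltr_wpDl // mulrC.
rewrite exprVn ltf_pV2 ?posrE ?exprn_gt0 //.
Qed.

Lemma geo_zero (c x : R) : 0 <= c -> c < 1 -> (forall n, x <= c ^+ n) -> x <= 0.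
Proof.
move=> c0 c1 H; rewrite leNgt; apply/negP => x0.
have [n hn] := geo_small c0 c1 x0.
by move: (H n); rewrite leNgt hn.
Qed.
End Real.

End A.
Import A.

Module B.
Set Implicit Arguments. Unset Strict Implicit. Unset Printing Implicit Defensive.

Section UM.
Variables (R : realType) (K : fieldType) (v : K -> R).
Hypothesis Hv : ultra_abs v.

Lemma vge0 x : 0 <= v x. Proof. by case: Hv. Qed.
Lemma v0 : v 0 = 0. Proof. by case: Hv => _ H _ _; apply/H. Qed.
Lemma v_eq0 x : (v x == 0) = (x == 0).
Proof. by case: Hv => _ H _ _; apply/eqP/eqP => /H. Qed.
Lemma vM x y : v (x * y) = v x * v y. Proof. by case: Hv. Qed.
Lemma vD x y : v (x + y) <= Num.max (v x) (v y). Proof. by case: Hv. Qed.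
Lemma v1 : v 1 = 1.
Proof.
have h := vM 1 1; rewrite mul1r in h.
have n0 : v 1 != 0 by rewrite v_eq0 oner_eq0.
by apply: (mulfI n0); rewrite -h mulr1.
Qed.
Lemma vN1 : v (-1) = 1.
Proof.
have h := vM (-1) (-1); rewrite mulrNN mulr1 v1 in h.
have g := vge0 (-1).
by apply/eqP; rewrite -(@eqrXn2 _ 2) // ?expr1n ?expr2 -?h.
Qed.
Lemma vN x : v (- x) = v x.
Proof. by rewrite -mulN1r vM vN1 mul1r. Qed.
Lemma vB x y : v (x - y) = v (y - x).
Proof. by rewrite -opprB vN. Qed.
Lemma vDle x y B : v x <= B -> v y <= B -> v (x + y) <= B.
Proof. by move=> hx hy; apply: le_trans (vD x y) _; rewrite ge_max hx hy. Qed.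
Lemma vDlt x y B : v x < B -> v y < B -> v (x + y) < B.
Proof. by move=> hx hy; apply: le_lt_trans (vD x y) _; rewrite gt_max hx hy. Qed.
Lemma vBle x y B : v x <= B -> v y <= B -> v (x - y) <= B.
Proof. by move=> hx hy; apply: vDle; rewrite ?vN. Qed.
Lemma vstrict x y : v y < v x -> v (x + y) = v x.
Proof.
move=> h; apply/eqP; rewrite eq_le; apply/andP; split.
  exact: (vDle (lexx _) (ltW h)).
have e : x = (x + y) + (- y) by rewrite addrK.
have := vD (x + y) (- y); rewrite -e vN.
rewrite le_max => /orP[] // hy.
by move: h; rewrite ltNge hy.
Qed.
Lemma v_sum_le (I : Type) (r : seq I) (P : pred I) (F : I -> K) B :
  0 <= B -> (forall i, P i -> v (F i) <= B) -> v (\sum_(i <- r | P i) F i) <= B.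
Proof.
move=> B0 H; apply: (big_ind (fun x => v x <= B)); first by rewrite v0.
  by move=> x y; apply: vDle.
exact: H.
Qed.
Lemma v_sum_lt (I : Type) (r : seq I) (P : pred I) (F : I -> K) B :
  0 < B -> (forall i, P i -> v (F i) < B) -> v (\sum_(i <- r | P i) F i) < B.
Proof.
move=> B0 H; apply: (big_ind (fun x => v x < B)); first by rewrite v0.
  by move=> x y; apply: vDlt.
exact: H.
Qed.
Lemma vX x n : v (x ^+ n) = v x ^+ n.
Proof. by elim: n => [|n IH]; rewrite ?expr0 ?v1 // !exprS vM IH. Qed.
Lemma vnat n : v n%:R <= 1.
Proof.
elim: n => [|n IH]; first by rewrite v0.
by rewrite mulrS; apply: vDle; rewrite ?v1.
Qed.
Lemma vMn x n : v (x *+ n) <= v x.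
Proof.
rewrite -mulr_natr vM; apply: le_trans (ler_wpM2l (vge0 _) (vnat n)) _.
by rewrite mulr1.
Qed.
Lemma vV x : v (x^-1) = (v x)^-1.
Proof.
have [->|x0] := eqVneq x 0; first by rewrite invr0 v0 invr0.
have n0 : v x != 0 by rewrite v_eq0.
by apply: (mulfI n0); rewrite -vM !mulfV // v1.
Qed.
Lemma vMle1 x y : v x <= 1 -> v y <= 1 -> v (x * y) <= 1.
Proof.
move=> hx hy; rewrite vM; apply: le_trans (ler_wpM2l (vge0 _) hy) _.
by rewrite mulr1.
Qed.
Lemma vMle x y B : v x <= 1 -> v y <= B -> v (x * y) <= B.
Proof.
move=> hx hy; rewrite vM; apply: le_trans (ler_wpM2r (vge0 _) hx) _.
by rewrite mul1r.
Qed.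
Lemma vMler x y B : v x <= B -> v y <= 1 -> v (x * y) <= B.
Proof. by move=> hx hy; rewrite mulrC; apply: vMle. Qed.

Lemma vXB x y k : v x <= 1 -> v y <= 1 -> v (x ^+ k - y ^+ k) <= v (x - y).
Proof.
move=> hx hy; case: k => [|k]; first by rewrite !expr0 subrr v0 vge0.
rewrite subrXX vM.
have hs : v (\sum_(i < k.+1) x ^+ (k - i) * y ^+ i) <= 1.
  apply: v_sum_le => // i _; apply: vMle1; rewrite vX ?exprn_ile1 ?vge0 //.
by apply: le_trans (ler_wpM2l (vge0 _) hs) _; rewrite mulr1.
Qed.

Lemma cvg_unique (u : nat -> K) l1 l2 : cvg_to v u l1 -> cvg_to v u l2 -> l1 = l2.
Proof.
move=> h1 h2; apply/eqP; rewrite -subr_eq0 -v_eq0 eq_le vge0 andbT leNgt.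
apply/negP => e0; set e := v (l1 - l2) in e0.
have e20 : 0 < e / 2 by rewrite divr_gt0.
have [N1 H1] := h1 _ e20; have [N2 H2] := h2 _ e20.
have hm := H1 (maxn N1 N2) (leq_maxl _ _); have hm2 := H2 (maxn N1 N2) (leq_maxr _ _).
have : v (l1 - l2) < e / 2.
  have -> : l1 - l2 = (u (maxn N1 N2) - l2) - (u (maxn N1 N2) - l1)
    by ring.
  by apply: vDlt; rewrite ?vN.
rewrite -/e; lra.
Qed.

Lemma cvg_bound (u : nat -> K) l a B N :
  cvg_to v u l -> (forall k, (N <= k)%N -> v (u k - a) <= B) -> v (l - a) <= B.
Proof.
move=> hc H; rewrite leNgt; apply/negP => hlt.
have B0 : 0 <= B by apply: le_trans (H N (leqnn _)); apply: vge0.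
have e0 : 0 < v (l - a) by apply: le_lt_trans hlt.
have [M HM] := hc _ e0.
have h1 := HM (maxn M N) (leq_maxl _ _).
have h2 := H (maxn M N) (leq_maxr _ _).
have : v (l - a) < v (l - a).
  have E : l - a = (u (maxn M N) - a) - (u (maxn M N) - l) by ring.
  rewrite {1}E; apply: vDlt; first exact: le_lt_trans h2 hlt.
  by rewrite vN.
by rewrite ltxx.
Qed.

Lemma v_geo_zero x c : 0 <= c -> c < 1 -> (forall n, v x <= c ^+ n) -> x = 0.
Proof.
move=> c0 c1 H; apply/eqP; rewrite -v_eq0 eq_le vge0 andbT.
exact: geo_zero c0 c1 H.
Qed.

End UM.

End B.
Import B.

Module C.
Set Implicit Arguments. Unset Strict Implicit. Unset Printing Implicit Defensive.

Section Eval.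
Variables (R : realType) (K : fieldType) (v : K -> R).
Hypothesis Hv : ultra_abs v.
Hypothesis Hc : complete_abs v.
Let vge0 := B.vge0 Hv. Let v0 := v0 Hv. Let v1 := v1 Hv. Let vM := vM Hv.
Let vN := vN Hv. Let vB := vB Hv. Let vX := vX Hv. Let vDle := vDle Hv.
Let vBle := vBle Hv. Let v_sum_le := v_sum_le Hv. Let vMle1 := vMle1 Hv.
Let vMle := vMle Hv. Let vMler := vMler Hv.

Lemma vexp_anti z N i : v z < 1 -> (N <= i)%N -> v z ^+ i <= v z ^+ N.
Proof. by move=> hz Ni; exact: (ler_wiXn2l (vge0 _) (ltW hz) Ni). Qed.

Definition psum (a : pser K) (z : K) N := \sum_(i < N) a i * z ^+ i.
Definition tr N (a : pser K) : {poly K} := \poly_(i < N) a i.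

Lemma psum_diff a z N M : (N <= M)%N ->
  psum a z M - psum a z N = \sum_(i < M | ~~ (i < N)%N) a i * z ^+ i.
Proof.
move=> NM; rewrite /psum (big_ord_widen M (fun i => a i * z ^+ i) NM).
by rewrite (bigID (fun i : 'I_M => (i < N)%N)) /= addrC addrK.
Qed.

Lemma psum_cauchy a z N M : ps_in_OK v a -> v z < 1 -> (N <= M)%N ->
  v (psum a z M - psum a z N) <= v z ^+ N.
Proof.
move=> ha hz NM; rewrite psum_diff //; apply: v_sum_le => //.
  by rewrite exprn_ge0 // vge0.
move=> i; rewrite -leqNgt => Ni; rewrite vM vX //.
apply: le_trans (ler_wpM2r (exprn_ge0 _ (vge0 _)) (ha i)) _; rewrite mul1r.
exact: vexp_anti.
Qed.

Lemma eval_cvg a z : ps_in_OK v a -> v z < 1 -> cvg_to v (psum a z) (ps_eval v a z).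
Proof.
move=> ha hz; rewrite /ps_eval; apply: (epsilon_spec (inhabits 0) (fun l => cvg_to v _ l)).
apply: Hc => e e0.
have [N hN] := geo_small (vge0 z) hz e0.
exists N => m n Nm Nn.
wlog mn : m n Nm Nn / (n <= m)%N.
  move=> W; case: (leqP n m) => h; first exact: W.
  by rewrite vB //; apply: W => //; apply: ltnW.
apply: le_lt_trans hN.
apply: le_trans (vexp_anti hz Nn).
exact: (psum_cauchy ha hz mn).
Qed.

Lemma eval_tail a z N : ps_in_OK v a -> v z < 1 ->
  v (ps_eval v a z - psum a z N) <= v z ^+ N.
Proof.
move=> ha hz; apply: (cvg_bound Hv (N := N) (eval_cvg ha hz)) => k Nk.
exact: psum_cauchy.
Qed.

Lemma eval_char a z L : ps_in_OK v a -> v z < 1 ->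
  (forall N, v (L - psum a z N) <= v z ^+ N) -> ps_eval v a z = L.
Proof.
move=> ha hz H; apply/eqP; rewrite -subr_eq0; apply/eqP.
apply: (v_geo_zero Hv (vge0 z) hz) => N.
have -> : ps_eval v a z - L = (ps_eval v a z - psum a z N) - (L - psum a z N) by ring.
by apply: vBle; [exact: eval_tail|exact: H].
Qed.

Lemma eval_fin a z M : ps_in_OK v a -> v z < 1 -> (forall i, (M <= i)%N -> a i = 0) ->
  ps_eval v a z = psum a z M.
Proof.
move=> ha hz H; apply: eval_char => // N.
case: (leqP M N) => h.
  rewrite -opprB vN // psum_diff // big1 ?v0 ?exprn_ge0 ?vge0 // => i.
  by rewrite -leqNgt => Ni; rewrite H ?mul0r // (leq_trans h Ni).
by apply: psum_cauchy => //; apply: ltnW.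
Qed.

Lemma OK_bound a : ps_in_OK v a -> forall i, v (a i) <= 1.
Proof. by []. Qed.

Lemma coef_tr N a i : (tr N a)`_i = if (i < N)%N then a i else 0.
Proof. exact: coef_poly. Qed.

Lemma psum_tr N a z : psum a z N = (tr N a).[z].
Proof.
rewrite (horner_coef_wide _ (size_poly _ _)) /psum.
by apply: eq_bigr => i _; rewrite coef_tr ltn_ord.
Qed.

Definition pOK (P : {poly K}) := forall i, v P`_i <= 1.

Lemma pOK_tr N a : ps_in_OK v a -> pOK (tr N a).
Proof. by move=> ha i; rewrite coef_tr; case: ifP => // _; rewrite v0. Qed.

Lemma pOK_mul P Q : pOK P -> pOK Q -> pOK (P * Q).
Proof. by move=> hP hQ i; rewrite coefM; apply: v_sum_le => // j _; apply: vMle1. Qed.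

Lemma pOK_exp P n : pOK P -> pOK (P ^+ n).
Proof.
move=> hP; elim: n => [|n IH]; last by rewrite exprS; apply: pOK_mul.
by move=> i; rewrite expr0 coef1; case: (i == 0%N); rewrite ?v1 ?v0.
Qed.

Lemma pOK_eval P z : pOK P -> v z <= 1 -> v P.[z] <= 1.
Proof.
move=> hP hz; rewrite horner_coef; apply: v_sum_le => // i _.
by apply: vMle1 => //; rewrite vX // exprn_ile1 // vge0.
Qed.

Lemma pOK_tail P z N : pOK P -> v z < 1 ->
  v (P.[z] - psum (fun i => P`_i) z N) <= v z ^+ N.
Proof.
move=> hP hz.
rewrite (horner_coef_wide z (leq_maxl (size P) N)).
by apply: psum_cauchy => //; apply: leq_maxr.
Qed.

Lemma psmul_tr N a b i : (i < N)%N -> psmul a b i = (tr N a * tr N b)`_i.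
Proof.
move=> iN; rewrite coefM /psmul; apply: eq_bigr => j _.
have jN : (j < N)%N by apply: leq_ltn_trans iN; rewrite -ltnS.
have ijN : (i - j < N)%N by apply: leq_ltn_trans iN; apply: leq_subr.
by rewrite !coef_tr jN ijN.
Qed.

Lemma OK_mul a b : ps_in_OK v a -> ps_in_OK v b -> ps_in_OK v (psmul a b).
Proof. by move=> ha hb i; apply: v_sum_le => // j _; apply: vMle1. Qed.

Lemma psum_ext a b z N : (forall i, (i < N)%N -> a i = b i) -> psum a z N = psum b z N.
Proof. by move=> H; apply: eq_bigr => i _; rewrite H. Qed.

Lemma vle1 z : v z < 1 -> v z <= 1. Proof. exact: ltW. Qed.

Lemma eval_mul a b z : ps_in_OK v a -> ps_in_OK v b -> v z < 1 ->
  ps_eval v (psmul a b) z = ps_eval v a z * ps_eval v b z.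
Proof.
move=> ha hb hz; apply: eval_char => //; first exact: OK_mul.
move=> N; set A := tr N a; set B := tr N b.
have r0 : 0 <= v z ^+ N by rewrite exprn_ge0 // vge0.
have hA := pOK_tr N ha; have hB := pOK_tr N hb.
have e1 := eval_tail N ha hz; have e2 := eval_tail N hb hz.
rewrite !psum_tr -/A -/B in e1 e2.
have -> : psum (psmul a b) z N = psum (fun i => (A * B)`_i) z N.
  by apply: psum_ext => i iN; rewrite (psmul_tr _ _ iN).
have hAB := pOK_tail N (pOK_mul hA hB) hz.
set x := ps_eval v a z in e1 *; set y := ps_eval v b z in e2 *.
have -> : x * y - psum (fun i => (A * B)`_i) z N =
   ((x - A.[z]) * y + A.[z] * (y - B.[z])) + ((A * B).[z] - psum (fun i => (A * B)`_i) z N).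
  by rewrite hornerM; ring.
have hy : v y <= 1.
  have -> : y = (y - B.[z]) + B.[z] by rewrite subrK.
  apply: vDle; last exact: pOK_eval (vle1 hz).
  by apply: le_trans e2 _; rewrite exprn_ile1 ?vge0 // vle1.
apply: vDle => //; apply: vDle.
- exact: vMler.
- by apply: vMle => //; apply: pOK_eval (vle1 hz).
Qed.

End Eval.

End C.
Import C.

Module D.
Set Implicit Arguments. Unset Strict Implicit. Unset Printing Implicit Defensive.

Section Comp.
Variables (R : realType) (K : fieldType) (v : K -> R).
Hypothesis Hv : ultra_abs v.
Hypothesis Hc : complete_abs v.
Let vge0 := B.vge0 Hv. Let v0 := B.v0 Hv. Let v1 := B.v1 Hv. Let vM := B.vM Hv.
Let vN := B.vN Hv. Let vB := B.vB Hv. Let vX := B.vX Hv. Let vDle := B.vDle Hv.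
Let vBle := B.vBle Hv. Let v_sum_le := B.v_sum_le Hv. Let vMle1 := B.vMle1 Hv.
Let vMle := B.vMle Hv. Let vMler := B.vMler Hv.
Let OK := ps_in_OK v.

Lemma pspowS (f : pser K) k : pspow f k.+1 = psmul f (pspow f k).
Proof. by []. Qed.

Lemma pspow_tr N (f : pser K) k i : (i < N)%N -> pspow f k i = ((tr N f) ^+ k)`_i.
Proof.
elim: k i => [|k IH] i iN; first by rewrite expr0 coef1.
rewrite pspowS exprS coefM /psmul; apply: eq_bigr => j _.
have jN : (j < N)%N by apply: leq_ltn_trans iN; rewrite -ltnS.
have ijN : (i - j < N)%N by apply: leq_ltn_trans iN; apply: leq_subr.
by rewrite coef_tr jN IH.
Qed.

Lemma pspow_low (f : pser K) k i : f 0%N = 0 -> (i < k)%N -> pspow f k i = 0.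
Proof.
move=> f0; elim: k i => [|k IH] i // ik.
rewrite pspowS /psmul big1 // => j _.
case: (posnP j) => [->|jp]; first by rewrite f0 mul0r.
rewrite IH ?mulr0 //.
have := ltn_ord j; lia.
Qed.

Lemma OK1 : OK (@ps1 K).
Proof. by move=> i; rewrite /ps1; case: (i == 0%N); rewrite ?v1 ?v0. Qed.
Lemma OKX : OK (@psX K).
Proof. by move=> i; rewrite /psX; case: (i == 1%N); rewrite ?v1 ?v0. Qed.
Lemma OK_sub a b : OK a -> OK b -> OK (pssub a b).
Proof. by move=> ha hb i; apply: vBle. Qed.
Definition psadd (a b : pser K) : pser K := fun n => a n + b n.
Lemma OK_add a b : OK a -> OK b -> OK (psadd a b).
Proof. by move=> ha hb i; apply: vDle. Qed.
Lemma OK_pow f k : OK f -> OK (pspow f k).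
Proof. by move=> hf; elim: k => [|k IH]; [exact: OK1 | exact: OK_mul]. Qed.
Lemma OK_comp g f : OK g -> OK f -> OK (pscomp g f).
Proof.
by move=> hg hf i; apply: v_sum_le => // k _; apply: vMle1 => //; apply: OK_pow.
Qed.
Lemma OK_deriv a : OK a -> OK (psderiv a).
Proof. by move=> ha i; apply: le_trans (vMn Hv _ _) _. Qed.

Lemma eval_sub a b z : OK a -> OK b -> v z < 1 ->
  ps_eval v (pssub a b) z = ps_eval v a z - ps_eval v b z.
Proof.
move=> ha hb hz; apply: eval_char => //; first exact: OK_sub.
move=> N; have -> : psum (pssub a b) z N = psum a z N - psum b z N.
  by rewrite /psum -sumrB; apply: eq_bigr => i _; rewrite /pssub mulrBl.
have -> : ps_eval v a z - ps_eval v b z - (psum a z N - psum b z N) =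
  (ps_eval v a z - psum a z N) - (ps_eval v b z - psum b z N) by ring.
by apply: vBle; apply: eval_tail.
Qed.

Lemma eval_add a b z : OK a -> OK b -> v z < 1 ->
  ps_eval v (psadd a b) z = ps_eval v a z + ps_eval v b z.
Proof.
move=> ha hb hz; apply: eval_char => //; first exact: OK_add.
move=> N; have -> : psum (psadd a b) z N = psum a z N + psum b z N.
  by rewrite /psum -big_split; apply: eq_bigr => i _; rewrite /psadd mulrDl.
have -> : ps_eval v a z + ps_eval v b z - (psum a z N + psum b z N) =
  (ps_eval v a z - psum a z N) + (ps_eval v b z - psum b z N) by ring.
by apply: vDle; apply: eval_tail.
Qed.

Lemma eval_X z : v z < 1 -> ps_eval v (@psX K) z = z.
Proof.
move=> hz; rewrite (eval_fin Hv Hc (M := 2) OKX hz); last first.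
  by case=> [|[|i]].
by rewrite /psum big_ord_recr big_ord1 /psX /= mul0r add0r mul1r expr1.
Qed.

Lemma eval_1 z : v z < 1 -> ps_eval v (@ps1 K) z = 1.
Proof.
move=> hz; rewrite (eval_fin Hv Hc (M := 1) OK1 hz); last by case.
by rewrite /psum big_ord1 /ps1 /= mul1r expr0.
Qed.

Lemma eval_small a z : OK a -> a 0%N = 0 -> v z < 1 -> v (ps_eval v a z) <= v z.
Proof.
move=> ha a0 hz; have := eval_tail Hv Hc 1 ha hz.
by rewrite /psum big_ord1 a0 mul0r subr0 expr1.
Qed.

Lemma eval_iso a z : OK a -> a 0%N = 0 -> v (a 1%N) = 1 -> v z < 1 ->
  v (ps_eval v a z) = v z.
Proof.
move=> ha a0 a1 hz.
have [->|zn0] := eqVneq z 0.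
  apply/eqP; rewrite v0 eq_le vge0 andbT -v0; apply: eval_small => //; by rewrite v0 ltr01.
have := eval_tail Hv Hc 2 ha hz.
rewrite /psum big_ord_recr big_ord1 /= a0 mul0r add0r expr1.
set w := ps_eval v a z => h.
have vz0 : 0 < v z by rewrite lt_def vge0 andbT B.v_eq0 // zn0.
have hlt : v (w - a 1%N * z) < v (a 1%N * z).
  apply: le_lt_trans h _; rewrite vM a1 mul1r expr2.
  by rewrite gtr_pMr.
have -> : w = a 1%N * z + (w - a 1%N * z) by rewrite addrC subrK.
by rewrite (vstrict Hv hlt) vM a1 mul1r.
Qed.

Lemma pscomp_tr N (g f : pser K) i : f 0%N = 0 -> (i < N)%N ->
  pscomp g f i = (\sum_(k < N) g k *: (tr N f) ^+ k)`_i.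
Proof.
move=> f0 iN; rewrite coef_sum /pscomp.
rewrite (big_ord_widen N (fun k => g k * pspow f k i) iN).
rewrite [RHS](bigID (fun k : 'I_N => (k < i.+1)%N)) /=.
rewrite [X in _ = _ + X]big1 ?addr0; last first.
  by move=> k; rewrite -leqNgt => ik; rewrite coefZ -(@pspow_tr N) // pspow_low // mulr0.
by apply: eq_bigr => k _; rewrite coefZ (@pspow_tr N).
Qed.

Lemma eval_comp g f z : OK g -> OK f -> f 0%N = 0 -> v z < 1 ->
  ps_eval v (pscomp g f) z = ps_eval v g (ps_eval v f z).
Proof.
move=> hg hf f0 hz.
set w := ps_eval v f z.
have hw : v w <= v z by apply: eval_small.
have hw1 : v w < 1 by apply: le_lt_trans hz.
apply: eval_char => //; first exact: OK_comp.
move=> N; set F := tr N f; set Q := \sum_(k < N) g k *: F ^+ k.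
have hF := pOK_tr Hv N hf.
have hQ : pOK v Q.
  move=> i; rewrite coef_sum; apply: v_sum_le => // k _; rewrite coefZ.
  by apply: vMle1 => //; apply: pOK_exp.
have -> : psum (pscomp g f) z N = psum (fun i => Q`_i) z N.
  by apply: psum_ext => i iN; rewrite (pscomp_tr g f0 iN).
have -> : ps_eval v g w - psum (fun i => Q`_i) z N =
   (ps_eval v g w - psum g w N) + (psum g w N - Q.[z]) +
   (Q.[z] - psum (fun i => Q`_i) z N) by ring.
apply: vDle; first apply: vDle.
- apply: le_trans (eval_tail Hv Hc N hg hw1) _.
  by apply: lerXn2r; rewrite ?nnegrE ?vge0.
- rewrite /psum /Q horner_sum -sumrB; apply: v_sum_le; first by rewrite exprn_ge0.
  move=> k _; rewrite hornerZ horner_exp -mulrBr; apply: vMle => //.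
  have hFz : v F.[z] <= 1 by apply: pOK_eval => //; apply: ltW.
  apply: le_trans (vXB Hv _ (ltW hw1) hFz) _.
  by rewrite /F -psum_tr; apply: eval_tail.
- exact: pOK_tail.
Qed.

Lemma deriv_mul (a b : pser K) : psderiv (psmul a b) = psadd (psmul (psderiv a) b) (psmul a (psderiv b)).
Proof.
apply: functional_extensionality => n.
pose N := n.+2.
set A := tr N a; set B := tr N b.
have h1 : psderiv (psmul a b) n = ((A * B)^`())`_n.
  by rewrite coef_deriv /psderiv (psmul_tr _ _ (ltnSn n.+1)).
rewrite h1 derivM coefD /psadd !coefM /psmul.
congr (_ + _); apply: eq_bigr => j _.
- have := ltn_ord j; rewrite /= => hj.
  have jN : (j.+1 < N)%N by rewrite /N; lia.
  have ijN : (n - j < N)%N by rewrite /N; lia.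
  by rewrite coef_deriv /psderiv !coef_tr jN ijN.
- have := ltn_ord j; rewrite /= => hj.
  have jN : (j < N)%N by rewrite /N; lia.
  have ijN : ((n - j).+1 < N)%N by rewrite /N; lia.
  by rewrite coef_deriv /psderiv !coef_tr jN ijN.
Qed.

End Comp.

End D.
Import D.

Module E.
Set Implicit Arguments. Unset Strict Implicit. Unset Printing Implicit Defensive.

Lemma max_bound (R : realType) (F : nat -> R) n :
  (forall i, (i < n)%N -> 0 <= F i /\ F i < 1) ->
  exists c, [/\ 0 <= c, c < 1 & forall i, (i < n)%N -> F i <= c].
Proof.
elim: n => [|n IH] H; first by exists 0; split.
have [c [c0 c1 hc]] : exists c, [/\ 0 <= c, c < 1 & forall i, (i < n)%N -> F i <= c].
  by apply: IH => i hi; apply: H; apply: ltnW.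
have [Fn0 Fn1] := H n (ltnSn n).
exists (Num.max c (F n)); split.
- by rewrite le_max c0.
- by rewrite gt_max c1 Fn1.
- move=> i; rewrite ltnS leq_eqVlt => /orP[/eqP->|hi]; first by rewrite le_max lexx orbT.
  by rewrite le_max hc.
Qed.

Section Weier.
Variables (R : realType) (K : fieldType) (v : K -> R).
Hypothesis Hv : ultra_abs v.
Hypothesis Hc : complete_abs v.
Let vge0 := B.vge0 Hv. Let v0 := B.v0 Hv. Let v1 := B.v1 Hv. Let vM := B.vM Hv.
Let vN := B.vN Hv. Let vB := B.vB Hv. Let vX := B.vX Hv. Let vDle := B.vDle Hv.
Let vBle := B.vBle Hv. Let v_sum_le := B.v_sum_le Hv. Let vMle1 := B.vMle1 Hv.
Let vMle := B.vMle Hv. Let vMler := B.vMler Hv.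
Let OK := ps_in_OK v.

Variables (h : pser K) (d : nat) (c : R).
Hypothesis hOK : OK h.
Hypothesis hu : v (h d) = 1.
Hypothesis c0 : 0 <= c.
Hypothesis c1 : c < 1.
Hypothesis hc : forall i, (i < d)%N -> v (h i) <= c.

Let u := h d.
Lemma u_n0 : u != 0.
Proof. by rewrite -(B.v_eq0 Hv) /u hu oner_eq0. Qed.
Lemma vuV : v u^-1 = 1.
Proof. by rewrite (B.vV Hv) /u hu invr1. Qed.

Definition Phi (w : pser K) : pser K :=
  fun m => w m + u^-1 * ((m == 0%N)%:R - psmul h w (m + d)%N).
Definition Wk k := iter k Phi (fun _ => 0).

Lemma psmul_sub a b n : psmul h a n - psmul h b n = psmul h (pssub a b) n.
Proof. by rewrite /psmul -sumrB; apply: eq_bigr => i _; rewrite /pssub mulrBr. Qed.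

Lemma rest_eq (w : pser K) m :
  psmul h w (m + d)%N - h d * w m = \sum_(i < (m + d).+1 | i != Ordinal (leq_addl m d : (d < (m + d).+1)%N)) h i * w (m + d - i)%N.
Proof.
rewrite /psmul (bigD1 (Ordinal (leq_addl m d : (d < (m + d).+1)%N))) //=.
by rewrite addnK addrC addrK.
Qed.

Lemma rest_bound (w : pser K) m E : 0 <= E ->
  (forall j, (j < m)%N -> v (w j) <= E) ->
  (forall j, (m < j)%N -> (j <= m + d)%N -> c * v (w j) <= E) ->
  v (psmul h w (m + d)%N - h d * w m) <= E.
Proof.
move=> E0 H1 H2; rewrite rest_eq; apply: v_sum_le => // i hi.
have hi' : (i : nat) != d by move: hi; apply: contra => /eqP e; apply/eqP/val_inj.
have := ltn_ord i => him.
case: (ltnP i d) => id.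
- rewrite vM; apply: le_trans (H2 (m + d - i)%N _ _); [|lia|lia].
  by apply: ler_wpM2r; [exact: vge0 | exact: hc].
- apply: vMle; first exact: hOK.
  apply: H1; move: hi' id him; clear; lia.
Qed.

Lemma Phi_diff (w w' : pser K) m :
  Phi w m - Phi w' m = - (u^-1 * (psmul h (pssub w w') (m + d)%N - h d * (pssub w w') m)).
Proof.
rewrite /Phi -psmul_sub /pssub -/u.
by have := u_n0 => un0; field.
Qed.

Lemma v_Phi_diff (w w' : pser K) m :
  v (Phi w m - Phi w' m) = v (psmul h (pssub w w') (m + d)%N - h d * (pssub w w') m).
Proof. by rewrite Phi_diff vN vM vuV mul1r. Qed.

Lemma OK_Phi w : OK w -> OK (Phi w).
Proof.
move=> hw m; apply: vDle => //; apply: vMle; first by rewrite vuV.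
apply: vBle; first exact: (vnat Hv).
exact: (OK_mul Hv hOK hw).
Qed.

Lemma OK_Wk k : OK (Wk k).
Proof.
elim: k => [|k IH]; first by move=> m; rewrite /Wk /= v0.
by rewrite /Wk iterS; apply: OK_Phi.
Qed.

Lemma cexp_anti a b : (a <= b)%N -> c ^+ b <= c ^+ a.
Proof. by move=> ab; exact: (ler_wiXn2l c0 (ltW c1) ab). Qed.

Lemma cexp_ge0 a : 0 <= c ^+ a. Proof. exact: exprn_ge0. Qed.

Lemma div_step a b D : (a <= b + D.+1)%N -> (a %/ D.+1 <= (b %/ D.+1).+1)%N.
Proof.
move=> hab; apply: leq_trans (leq_div2r D.+1 hab) _.
by rewrite addnC -{1}(mul1n D.+1) divnMDl // addnC addn1.
Qed.

Lemma Wk_step k m : v (Wk k.+1 m - Wk k m) <= c ^+ ((k - m) %/ d.+1).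
Proof.
elim: k m => [|k IH] m.
  rewrite /Wk /= subr0 div0n expr0.
  exact: (OK_Phi (OK_Wk 0) m).
have -> : Wk k.+2 m - Wk k.+1 m = Phi (Wk k.+1) m - Phi (Wk k) m by [].
rewrite v_Phi_diff; apply: rest_bound; first exact: cexp_ge0.
- move=> j jm; apply: le_trans (IH j) _; apply: cexp_anti.
  by apply: leq_div2r; lia.
- move=> j mj jmd; apply: le_trans (ler_wpM2l c0 (IH j)) _.
  rewrite -exprS; apply: cexp_anti; apply: div_step; lia.
Qed.

Lemma Wk_cauchy k k' m : (k <= k')%N -> v (Wk k' m - Wk k m) <= c ^+ ((k - m) %/ d.+1).
Proof.
elim: k' => [|k' IH]; first by rewrite leqn0 => /eqP->; rewrite subrr v0 cexp_ge0.
rewrite leq_eqVlt => /orP[/eqP->|]; first by rewrite subrr v0 cexp_ge0.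
rewrite ltnS => kk.
have -> : Wk k'.+1 m - Wk k m = (Wk k'.+1 m - Wk k' m) + (Wk k' m - Wk k m) by ring.
apply: vDle; last exact: IH.
apply: le_trans (Wk_step k' m) _; apply: cexp_anti; apply: leq_div2r; lia.
Qed.

Definition Wlim : pser K := fun m =>
  epsilon (inhabits 0) (fun l => cvg_to v (fun k => Wk k m) l).

Lemma Wlim_cvg m : cvg_to v (fun k => Wk k m) (Wlim m).
Proof.
apply: (epsilon_spec (inhabits 0) (fun l => cvg_to v _ l)).
apply: Hc => e e0.
have [n hn] := geo_small c0 c1 e0.
exists (m + n * d.+1)%N => a b ha hb.
wlog ab : a b ha hb / (a <= b)%N.
  move=> W; case: (leqP a b) => hab; first exact: W.
  by rewrite vB; apply: W => //; apply: ltnW.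
rewrite vB; apply: le_lt_trans hn; apply: le_trans (Wk_cauchy m ab) _.
apply: cexp_anti.
have : (n * d.+1 <= a - m)%N by lia.
move=> /(leq_div2r d.+1); rewrite mulnK //.
Qed.

Lemma Wlim_bound k m : v (Wlim m - Wk k m) <= c ^+ ((k - m) %/ d.+1).
Proof.
apply: (cvg_bound Hv (N := k) (Wlim_cvg m)) => k' kk'.
exact: Wk_cauchy.
Qed.

Lemma OK_Wlim : OK Wlim.
Proof.
move=> m; rewrite -[Wlim m]subr0.
by apply: (cvg_bound Hv (N := 0) (Wlim_cvg m)) => k _; rewrite subr0; apply: OK_Wk.
Qed.

Lemma Wlim_fix m : psmul h Wlim (m + d)%N = (m == 0%N)%:R.
Proof.
suff : Wlim m - Phi Wlim m = 0.
  rewrite /Phi opprD addrA subrr add0r => /eqP.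
  rewrite oppr_eq0 mulf_eq0 invr_eq0 (negbTE u_n0) /= subr_eq0 => /eqP.
  by move=> ->.
apply: (v_geo_zero Hv c0 c1) => e.
pose k := (m + d + e * d.+1)%N.
have ek : ((k - (m + d)) %/ d.+1)%N = e by rewrite /k addKn mulnK.
rewrite -ek.
have -> : Wlim m - Phi Wlim m = (Wlim m - Wk k.+1 m) + (Phi (Wk k) m - Phi Wlim m).
  have -> : Wk k.+1 m = Phi (Wk k) m by [].
  by ring.
apply: vDle.
  apply: le_trans (Wlim_bound k.+1 m) _; apply: cexp_anti; apply: leq_div2r; lia.
rewrite v_Phi_diff; apply: rest_bound; first exact: cexp_ge0.
- move=> j jm; rewrite /pssub vB; apply: le_trans (Wlim_bound k j) _.
  apply: cexp_anti; apply: leq_div2r; lia.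
- move=> j mj jmd; rewrite /pssub vB.
  apply: le_trans (ler_wpM2l c0 (Wlim_bound k j)) _.
  apply: le_trans (ler_wpM2r (cexp_ge0 _) (ltW c1)) _; rewrite mul1r.
  apply: cexp_anti; apply: leq_div2r; lia.
Qed.

End Weier.

End E.
Import E.

Module F.
Set Implicit Arguments. Unset Strict Implicit. Unset Printing Implicit Defensive.

Section Roots.
Variables (R : realType) (K : closedFieldType) (v : K -> R).
Hypothesis Hv : ultra_abs v.
Hypothesis Hc : complete_abs v.
Let vge0 := B.vge0 Hv. Let v0 := B.v0 Hv. Let v1 := B.v1 Hv. Let vM := B.vM Hv.
Let vN := B.vN Hv. Let vB := B.vB Hv. Let vX := B.vX Hv. Let vDle := B.vDle Hv.
Let vBle := B.vBle Hv. Let v_sum_le := B.v_sum_le Hv. Let vMle1 := B.vMle1 Hv.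
Let vMle := B.vMle Hv. Let vMler := B.vMler Hv. Let v_sum_lt := B.v_sum_lt Hv.
Let OK := ps_in_OK v.

Lemma v_prod (s : seq K) (F : K -> K) : v (\prod_(x <- s) F x) = \prod_(x <- s) v (F x).
Proof. by elim: s => [|a s IH]; rewrite ?big_nil ?v1 // !big_cons vM IH. Qed.

Lemma weier (h : pser K) d : OK h -> wideg_is v h d ->
  exists rs : seq K, [/\ size rs = d,
    forall x, v x < 1 -> (ps_eval v h x = 0 <-> x \in rs),
    forall x, x \in rs -> v x < 1 &
    v (h 0%N) = \prod_(x <- rs) v x].
Proof.
move=> hOK [hd1 hlow].
have hd : v (h d) = 1 by apply/eqP; rewrite eq_le hOK /= leNgt; apply/negP.
have [c [c0 c1 hc]] : exists c, [/\ 0 <= c, c < 1 & forall i, (i < d)%N -> v (h i) <= c].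
  by apply: max_bound => i hi; split; [exact: vge0 | exact: hlow].
set W := Wlim v h d.
have WOK : OK W := OK_Wlim Hv Hc hOK hd c0 c1 hc.
have Wfix : forall m, psmul h W (m + d)%N = (m == 0%N)%:R := Wlim_fix Hv Hc hOK hd c0 c1 hc.
pose P : {poly K} := \poly_(i < d.+1) psmul h W i.
have coefP : forall i, P`_i = psmul h W i.
  move=> i; rewrite coef_poly; case: ifP => // /negbT; rewrite -leqNgt => di.
  have := Wfix (i - d)%N; rewrite subnK ?(ltnW di) // => ->.
  by have -> : (i - d == 0)%N = false by apply/negbTE; rewrite subn_eq0 -ltnNge.
have Pd : P`_d = 1 by rewrite coefP -(add0n d) Wfix.
have Plow : forall i, (i < d)%N -> v (P`_i) < 1.
  move=> i id; rewrite coefP /psmul; apply: v_sum_lt => // j _.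
  have jd : (j < d)%N by apply: leq_ltn_trans id; rewrite -ltnS.
  apply: le_lt_trans (vMler (hc _ jd) (WOK _)) c1.
have sP : size P = d.+1.
  by rewrite size_poly_eq //= -coefP Pd oner_eq0.
have mP : lead_coef P = 1 by rewrite lead_coefE sP /= Pd.
have evP : forall x, v x < 1 -> ps_eval v h x * ps_eval v W x = P.[x].
  move=> x hx; rewrite -(eval_mul Hv Hc hOK WOK hx).
  rewrite (eval_fin Hv Hc (M := d.+1) (OK_mul Hv hOK WOK) hx); last first.
    by move=> i di; rewrite -coefP nth_default // sP.
  rewrite (horner_coef_wide x (eq_leq sP)).
  by apply: eq_bigr => i _; rewrite coefP.
have W0 : v (W 0%N) = 1.
  have := Pd; rewrite coefP /psmul big_ord_recr /= subnn => e.
  have hs : v (\sum_(i < d) h i * W (d - i)%N) < 1.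
    apply: v_sum_lt => // j _.
    by apply: le_lt_trans (vMler (hc _ (ltn_ord j)) (WOK _)) c1.
  have : v (h d * W 0%N) = 1.
    have -> : h d * W 0%N = 1 + (- \sum_(i < d) h i * W (d - i)%N).
      by rewrite -e; ring.
    by rewrite (vstrict Hv) v1 // vN.
  by rewrite vM hd mul1r.
have Wx : forall x, v x < 1 -> v (ps_eval v W x) = 1.
  move=> x hx; have := eval_tail Hv Hc 1 WOK hx.
  rewrite /psum big_ord1 expr1 expr0 mulr1 => ht.
  have -> : ps_eval v W x = W 0%N + (ps_eval v W x - W 0%N) by rewrite addrC subrK.
  by rewrite (vstrict Hv) // W0; apply: le_lt_trans ht hx.
have [rs Prs] := closed_field_poly_normal P.
rewrite mP scale1r in Prs.
exists rs; split.
- by have := sP; rewrite Prs size_prod_XsubC => -[].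
- move=> x hx; have Wn0 : ps_eval v W x != 0.
    by rewrite -(B.v_eq0 Hv) Wx // oner_eq0.
  rewrite -root_prod_XsubC -Prs /root -evP // mulf_eq0 (negbTE Wn0) orbF.
  by split => [->|/eqP].
- move=> x xrs; rewrite ltNge; apply/negP => hx.
  have : root P x by rewrite Prs root_prod_XsubC.
  rewrite /root (horner_coef_wide x (eq_leq sP)).
  rewrite big_ord_recr /= Pd mul1r.
  have vx0 : 0 < v x by apply: lt_le_trans hx.
  have hs : v (\sum_(i < d) P`_i * x ^+ i) < v (x ^+ d).
    apply: v_sum_lt; first by rewrite vX exprn_gt0.
    move=> i _; rewrite vM !vX.
    apply: lt_le_trans (_ : v x ^+ i <= v x ^+ d).
      by rewrite gtr_pMl ?exprn_gt0 // Plow.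
    by apply: ler_weXn2l => //; apply: ltnW.
  rewrite addrC -(B.v_eq0 Hv) (vstrict Hv hs) vX expf_eq0.
  by rewrite (gt_eqF vx0) andbF.
- have := coefP 0%N; rewrite /psmul big_ord1 subnn => e.
  have : v (P`_0) = \prod_(x <- rs) v x.
    rewrite -horner_coef0 Prs horner_prod.
    rewrite (eq_bigr (fun z => - z)); last by move=> z _; rewrite hornerXsubC add0r.
    rewrite v_prod; apply: eq_bigr => z _; exact: vN.
  by rewrite e vM W0 mulr1.
Qed.
End Roots.

End F.
Import F.

Module G.
Set Implicit Arguments. Unset Strict Implicit. Unset Printing Implicit Defensive.

Section Dyn.
Variables (R : realType) (K : fieldType) (v : K -> R).
Hypothesis Hv : ultra_abs v.
Hypothesis Hc : complete_abs v.
Let vge0 := B.vge0 Hv. Let v0 := B.v0 Hv. Let v1 := B.v1 Hv. Let vM := B.vM Hv.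
Let vN := B.vN Hv. Let vB := B.vB Hv. Let vX := B.vX Hv. Let vDle := B.vDle Hv.
Let vBle := B.vBle Hv. Let v_sum_le := B.v_sum_le Hv. Let vMle1 := B.vMle1 Hv.
Let vMle := B.vMle Hv. Let vMler := B.vMler Hv. Let v_sum_lt := B.v_sum_lt Hv.
Let OK := ps_in_OK v.
Let OKX := OKX Hv. Let OK1 := OK1 Hv. Let OK_sub := OK_sub Hv. Let OK_comp := OK_comp Hv.
Let OK_mul := OK_mul Hv. Let OK_add := OK_add Hv. Let OK_deriv := OK_deriv Hv.
Let eval_X := eval_X Hv Hc. Let eval_1 := eval_1 Hv Hc. Let eval_sub := eval_sub Hv Hc.
Let eval_add := eval_add Hv Hc. Let eval_mul := eval_mul Hv Hc. Let eval_comp := eval_comp Hv Hc.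
Let eval_iso := eval_iso Hv Hc.

Lemma eval0 a : OK a -> ps_eval v a 0 = a 0%N.
Proof.
move=> ha; have hz : v 0 < 1 by rewrite v0 ltr01.
have := eval_tail Hv Hc 1 ha hz; rewrite /psum big_ord1 expr0 mulr1 v0 expr1.
move=> h; apply/eqP; rewrite -subr_eq0 -(B.v_eq0 Hv) eq_le h vge0 //.
Qed.

Variables (f : pser K) (lam : K).
Hypothesis hf0 : f 0%N = 0.
Hypothesis hf1 : f 1%N = lam.
Hypothesis fOK : OK f.
Hypothesis vlam : v lam = 1.

Lemma iter_props m : [/\ OK (psiter f m), psiter f m 0%N = 0 & psiter f m 1%N = lam ^+ m].
Proof.
elim: m => [|m [IH1 IH2 IH3]].
  by split; [exact: OKX | by [] | by rewrite expr0].
rewrite /psiter iterS -/(psiter f m); split.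
- exact: OK_comp.
- by rewrite /pscomp big_ord1 hf0 mul0r.
- rewrite /pscomp big_ord_recr big_ord1 /= hf0 mul0r add0r hf1.
  rewrite /pspow /= /psmul big_ord_recr big_ord1 /= IH2 mul0r add0r /ps1 /= mulr1.
  by rewrite IH3 exprS.
Qed.

Lemma OK_iter m : OK (psiter f m). Proof. by case: (iter_props m). Qed.
Lemma iter0 m : psiter f m 0%N = 0. Proof. by case: (iter_props m). Qed.
Lemma iter1 m : psiter f m 1%N = lam ^+ m. Proof. by case: (iter_props m). Qed.

Lemma dyn_eval m z : v z < 1 -> dyn v f m z = ps_eval v (psiter f m) z.
Proof.
move=> hz; elim: m => [|m IH]; first by rewrite /dyn /= eval_X.
rewrite /dyn iterS -/(dyn v f m z) IH /psiter iterS -/(psiter f m).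
rewrite eval_comp //; by [apply: OK_iter | apply: iter0].
Qed.

Lemma dyn_iso m z : v z < 1 -> v (dyn v f m z) = v z.
Proof.
move=> hz; rewrite dyn_eval // eval_iso //; [exact: OK_iter|exact: iter0|].
by rewrite iter1 vX vlam expr1n.
Qed.

Lemma dyn_small m z : v z < 1 -> v (dyn v f m z) < 1.
Proof. by move=> hz; rewrite dyn_iso. Qed.

Lemma dynD a b z : dyn v f (a + b) z = dyn v f a (dyn v f b z).
Proof. exact: iterD. Qed.

Lemma dyn0 m : dyn v f m 0 = 0.
Proof.
have hz : v 0 < 1 by rewrite v0 ltr01.
by rewrite dyn_eval // eval0 ?iter0 //; exact: OK_iter.
Qed.

Definition gser m := pssub (psiter f m) (@psX K).

Lemma OK_g m : OK (gser m). Proof. apply: OK_sub; [exact: OK_iter | exact: OKX]. Qed.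
Lemma g0 m : gser m 0%N = 0. Proof. by rewrite /gser /pssub iter0 /psX subr0. Qed.
Lemma g1 m : gser m 1%N = lam ^+ m - 1. Proof. by rewrite /gser /pssub iter1. Qed.

Lemma g_eval m z : v z < 1 -> ps_eval v (gser m) z = dyn v f m z - z.
Proof.
move=> hz; rewrite eval_sub; [|exact: OK_iter|exact: OKX|exact: hz].
by rewrite eval_X // dyn_eval.
Qed.

Lemma nonres m z : ~ (v (lam ^+ m - 1) < 1) -> v z < 1 -> z != 0 -> dyn v f m z != z.
Proof.
move=> hl hz zn0; rewrite -subr_eq0 -g_eval // -(B.v_eq0 Hv).
rewrite eval_iso //; [by rewrite B.v_eq0|exact: OK_g|exact: g0|].
rewrite g1; apply/eqP; rewrite eq_le; apply/andP; split.
  by apply: vBle; [rewrite vX vlam expr1n | rewrite v1].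
by rewrite leNgt; apply/negP.
Qed.

Lemma per_mult k j x : dyn v f k x = x -> dyn v f (j * k) x = x.
Proof.
move=> hk; elim: j => [|j IH]; first by [].
by rewrite mulSn dynD IH hk.
Qed.

Lemma per_commute N j x : dyn v f N (dyn v f j x) = dyn v f j (dyn v f N x).
Proof. by rewrite -!dynD addnC. Qed.

Lemma minper_exists N x : v x < 1 -> (0 < N)%N -> dyn v f N x = x ->
  exists k, min_period v f k x /\ (k %| N)%N.
Proof.
move=> hx N0 hN.
have exP : exists n, (0 < n)%N && (dyn v f n x == x) by exists N; rewrite N0 hN eqxx.
case: (ex_minnP exP) => k /andP[k0 /eqP hk] kmin.
exists k; split.
  split => // j /andP[j0 jk] hj.
  by have := kmin j; rewrite j0 hj eqxx => /(_ isT); rewrite leqNgt jk.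
have hmod : dyn v f (N %% k) x = x.
  by move: hN; rewrite {1}(divn_eq N k) addnC dynD per_mult.
apply/dvdnP; exists (N %/ k)%N.
case: (posnP (N %% k)) => hm.
  by rewrite {1}(divn_eq N k) hm addn0.
have := kmin (N %% k)%N; rewrite hm hmod eqxx => /(_ isT).
by rewrite leqNgt ltn_pmod.
Qed.

Lemma orbit_uniq N x : min_period v f N x -> uniq [seq dyn v f j x | j <- iota 0 N].
Proof.
case=> hx N0 hN hmin; rewrite map_inj_in_uniq ?iota_uniq //.
suff H : forall i j, (i < j)%N -> (j < N)%N -> dyn v f i x <> dyn v f j x.
  move=> i j; rewrite !mem_iota /= !add0n => iN jN e.
  case: (ltngtP i j) => // h; first by case: (H i j h jN e).
  by case: (H j i h iN (esym e)).
move=> i j ij jN e.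
have : dyn v f (N - j + i) x = x.
  by rewrite dynD e -dynD subnK ?(ltnW jN).
by apply: hmin; apply/andP; split; lia.
Qed.

Lemma orbit_fill (rs : seq K) N x : min_period v f N x ->
  (forall j, (j < N)%N -> dyn v f j x \in rs) -> size rs = N ->
  forall y, y \in rs -> exists j, y = dyn v f j x.
Proof.
move=> hm hin hs y yrs.
have U := orbit_uniq hm.
have sub : {subset [seq dyn v f j x | j <- iota 0 N] <= rs}.
  by move=> z /mapP[j]; rewrite mem_iota /= add0n => jN ->; apply: hin.
have hsz : (size rs <= size [seq dyn v f j x | j <- iota 0 N])%N.
  by rewrite size_map size_iota hs.
have [_ eqs] := uniq_min_size U sub hsz.
by move: yrs; rewrite -eqs => /mapP[j _ ->]; exists j.
Qed.

Lemma iter_cancel N j a b : (0 < N)%N -> dyn v f N a = a -> dyn v f N b = b ->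
  dyn v f j a = dyn v f j b -> a = b.
Proof.
move=> N0 ha hb e.
have eq : (j * N = j * N.-1 + j)%N by rewrite -{3}(muln1 j) -mulnDr addn1 prednK.
by rewrite -(per_mult j ha) -(per_mult j hb) eq !dynD e.
Qed.

End Dyn.

Lemma res_dvd (R : realType) (K : fieldType) (v : K -> R) (lam : K) q k :
  ultra_abs v -> v lam = 1 -> (0 < q)%N -> residue_order v lam q ->
  v (lam ^+ k - 1) < 1 -> (q %| k)%N.
Proof.
move=> Hv vlam q0 [hq hmin] hk.
set a := lam ^+ q; set t := (k %/ q)%N; set b := lam ^+ (k %% q).
have va : v a <= 1 by rewrite /a B.vX // vlam expr1n.
have hat : v (a ^+ t - 1) < 1.
  have h1 : v (1 : K) <= 1 by rewrite B.v1.
  by have := vXB Hv t va h1; rewrite expr1n => H; apply: le_lt_trans H hq.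
have vb : v b = 1 by rewrite /b B.vX // vlam expr1n.
have e : lam ^+ k - 1 = (a ^+ t - 1) * b + (b - 1).
  have E1 : lam ^+ k = a ^+ t * b by rewrite /a /b /t -exprM mulnC -exprD -divn_eq.
  by rewrite E1; ring.
have hb : v (b - 1) < 1.
  have -> : b - 1 = (lam ^+ k - 1) - (a ^+ t - 1) * b by rewrite e; ring.
  apply: B.vDlt => //; rewrite B.vN // B.vM // vb mulr1 //.
case: (posnP (k %% q)) => hm; first by apply/dvdnP; exists t; rewrite {1}(divn_eq k q) hm addn0.
by case: (hmin (k %% q)%N); rewrite ?hm ?ltn_pmod.
Qed.

End G.
Import G.

Module H.
Set Implicit Arguments. Unset Strict Implicit. Unset Printing Implicit Defensive.

Lemma powR_root (R : realType) (x r : R) n : 0 <= r -> (0 < n)%N -> x = r ^+ n ->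
  r = powR x (n%:R^-1).
Proof.
move=> r0 n0 ->; rewrite -powR_mulrn // -powRrM mulfV ?powRr1 //.
by rewrite pnatr_eq0 -lt0n.
Qed.

Lemma prod_const (R : realType) (K : eqType) (s : seq K) (F : K -> R) c :
  (forall x, x \in s -> F x = c) -> \prod_(x <- s) F x = c ^+ size s.
Proof.
elim: s => [|a s IH] H; first by rewrite big_nil expr0.
rewrite big_cons IH ?H ?mem_head //= ?exprS // => x xs.
by apply: H; rewrite in_cons xs orbT.
Qed.

Section Main.
Variables (R : realType) (K : closedFieldType) (v : K -> R).
Hypothesis Hv : ultra_abs v.
Hypothesis Hc : complete_abs v.
Variables (f : pser K) (lam : K) (q : nat).
Hypothesis hf0 : f 0%N = 0.
Hypothesis hf1 : f 1%N = lam.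
Hypothesis fOK : ps_in_OK v f.
Hypothesis vlam : v lam = 1.
Hypothesis q0 : (0 < q)%N.
Hypothesis hres : residue_order v lam q.

Let OK := ps_in_OK v.
Let v0 := B.v0 Hv. Let v1 := B.v1 Hv. Let vM := B.vM Hv.
Let OKX := OKX Hv. Let OK1 := OK1 Hv. Let OK_mul := OK_mul Hv. Let OK_deriv := OK_deriv Hv.
Let eval_X := eval_X Hv Hc. Let eval_1 := eval_1 Hv Hc. Let eval_mul := eval_mul Hv Hc.
Let eval_add := eval_add Hv Hc.
Let dyn_iso := dyn_iso Hv Hc hf0 hf1 fOK vlam.
Let dyn_small := dyn_small Hv Hc hf0 hf1 fOK vlam.
Let g_eval := g_eval Hv Hc hf0 hf1 fOK.
Let OK_g := OK_g Hv hf0 hf1 fOK.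
Let OK_iter := OK_iter Hv hf0 hf1 fOK.
Let g0 := g0 Hv hf0 hf1 fOK.
Let g1 := g1 Hv hf0 hf1 fOK.
Let nonres := nonres Hv Hc hf0 hf1 fOK vlam.
Let dyn0 := dyn0 Hv Hc hf0 hf1 fOK.
Let eval0 := eval0 Hv Hc.
Let iter1 := iter1 Hv hf0 hf1 fOK.

Lemma vne0 x : x != 0 -> v x != 0. Proof. by rewrite B.v_eq0. Qed.

Lemma minper_res x k : min_period v f k x -> x != 0 -> (q %| k)%N.
Proof.
case=> hx k0 hk _ xn0.
apply: (res_dvd Hv vlam q0 hres).
rewrite ltNge; apply/negP => hle.
have H : ~ (v (lam ^+ k - 1) < 1) by rewrite ltNge hle.
by move: (nonres H hx xn0); rewrite hk eqxx.
Qed.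

Lemma part1 : wideg_is v (pssub (psiter f q) (@psX K)) q.+1 -> lam ^+ q != 1 ->
     (exists w0, min_period v f q w0 /\ w0 != 0 /\
        forall w, min_period v f q w -> w != 0 -> exists k, w = dyn v f k w0) /\
     (forall w, min_period v f q w -> w != 0 ->
        v w = powR (v (lam ^+ q - 1)) (q%:R^-1)).
Proof.
move=> hw hlq.
pose g := gser f q.
pose h1 : pser K := fun n => g n.+1.
have h1OK : OK h1 by move=> n; apply: OK_g.
have hw1 : wideg_is v h1 q.
  by case: hw => hw1 hw2; split => // i iq; apply: hw2.
have mulX : psmul (@psX K) h1 = g.
  apply: functional_extensionality => n; rewrite /psmul.
  case: n => [|n]; first by rewrite big_ord1 /psX /= mul0r /g g0.
  rewrite big_ord_recl /= /psX /= mul0r add0r big_ord_recl /= mul1r subn1 /=.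
  rewrite big1 ?addr0 // => i _; by rewrite /bump /= mul0r.
have evg : forall x, v x < 1 -> dyn v f q x - x = x * ps_eval v h1 x.
  by move=> x hx; rewrite -g_eval // -/g -mulX eval_mul // eval_X.
have [rs [srs hroot hsmall hprod]] := weier Hv Hc h1OK hw1.
have h10 : h1 0%N = lam ^+ q - 1 by rewrite /h1 /g g1.
have rootchar : forall x, v x < 1 -> (x \in rs <-> x != 0 /\ dyn v f q x = x).
  move=> x hx; rewrite -hroot //; split.
    move=> e; split.
      apply/eqP => x0; move: e; rewrite x0 eval0 // h10 => /eqP.
      by rewrite subr_eq0 (negbTE hlq).
    by apply/eqP; rewrite -subr_eq0 evg // e mulr0.
  case=> xn0 hd; have := evg x hx; rewrite hd subrr => /esym/eqP.
  by rewrite mulf_eq0 (negbTE xn0) => /eqP.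
have minper : forall x, x \in rs -> min_period v f q x.
  move=> x xrs; have [xn0 hd] := (rootchar x (hsmall x xrs)).1 xrs.
  have [k [mk kq]] := minper_exists (hsmall x xrs) q0 hd.
  have qk := minper_res mk xn0.
  suff -> : q = k by [].
  by apply/eqP; rewrite eqn_dvd qk kq.
have r_in : nth 0 rs 0 \in rs by apply: mem_nth; rewrite srs.
set r := nth 0 rs 0 in r_in.
have [rn0 rper] := (rootchar r (hsmall r r_in)).1 r_in.
have orb : forall j, (j < q)%N -> dyn v f j r \in rs.
  move=> j _; apply/(rootchar _ (dyn_small _ (hsmall r r_in))); split.
    by rewrite -(B.v_eq0 Hv) dyn_iso ?hsmall // vne0.
  by rewrite per_commute rper.
have inorb : forall w, min_period v f q w -> w != 0 -> exists k, w = dyn v f k r.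
  move=> w [hw0 _ hwq _] wn0.
  apply: (orbit_fill (minper r r_in) orb srs).
  by apply/(rootchar w hw0).
split.
  exists r; split; first exact: minper.
  by split.
move=> w mw wn0.
have [j ->] := inorb w mw wn0.
rewrite dyn_iso ?hsmall //.
apply: powR_root; [exact: B.vge0 | exact: q0 |].
rewrite -h10 hprod -srs; apply: prod_const => x xrs.
have [k ->] := orbit_fill (minper r r_in) orb srs xrs.
by rewrite dyn_iso ?hsmall.
Qed.

Lemma psderiv_add (a b : pser K) : psderiv (psadd a b) = psadd (psderiv a) (psderiv b).
Proof. by apply: functional_extensionality => n; rewrite /psderiv /psadd mulrnDl. Qed.

Lemma psderiv_X : psderiv (@psX K) = @ps1 K.
Proof.
apply: functional_extensionality => n; rewrite /psderiv /psX /ps1.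
by case: n => [|n] /=; rewrite ?mulr1n // mul0rn.
Qed.

Lemma part2 (p n : nat) : prime p -> (1 <= n)%N ->
     (exists h : pser K,
        ps_in_OK v h /\
        (exists i, pssub (psiter f (q * p ^ n.-1)) (@psX K) i != 0) /\
        psmul h (pssub (psiter f (q * p ^ n.-1)) (@psX K))
          = pssub (psiter f (q * p ^ n)) (@psX K) /\
        wideg_is v h (q * p ^ n)) ->
     (forall z0, periodic_pt v f (q * p ^ n.-1) z0 ->
        ps_eval v (psderiv (psiter f (q * p ^ n))) z0 != 1) ->
     (exists z0, min_period v f (q * p ^ n) z0 /\
        forall w, min_period v f (q * p ^ n) w -> exists k, w = dyn v f k z0) /\
     (forall z0, min_period v f (q * p ^ n) z0 ->
        v z0 = powR (v (lam ^+ (q * p ^ n) - 1) / v (lam ^+ (q * p ^ n.-1) - 1))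
                    ((q * p ^ n)%:R^-1)).
Proof.
move=> pp n1 [h [hOK [_ [hmul hw]]]] hder.
set N := (q * p ^ n)%N in hmul hw hder *.
set N' := (q * p ^ n.-1)%N in hmul hder *.
have p1 : (1 < p)%N by apply: prime_gt1.
have pnS : (p ^ n = p ^ n.-1 * p)%N by rewrite -expnSr prednK.
have N'N : (N' < N)%N by rewrite /N /N' ltn_pmul2l // ltn_exp2l // prednK.
have N'0 : (0 < N')%N by rewrite /N' muln_gt0 q0 expn_gt0 ltnW.
have N0 : (0 < N)%N by apply: ltn_trans N'N.
have hmul' : psmul h (gser f N') = gser f N by [].
have evmul : forall x, v x < 1 -> dyn v f N x - x = ps_eval v h x * (dyn v f N' x - x).
  move=> x hx; rewrite -!g_eval // -hmul' eval_mul //; exact: OK_g.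
have deriv : forall x, v x < 1 -> ps_eval v h x = 0 -> dyn v f N' x = x ->
    ps_eval v (psderiv (psiter f N)) x = 1.
  move=> x hx hx0 hper.
  have e : psiter f N = psadd (gser f N) (@psX K).
    apply: functional_extensionality => i; rewrite /psadd /gser /pssub; ring.
  have OKh' := OK_deriv hOK.
  have OKg' := OK_g N'.
  rewrite e psderiv_add psderiv_X eval_add //; try exact: OK1; try exact: (OK_deriv (OK_g N)).
  rewrite eval_1 // -hmul' deriv_mul eval_add //; try exact: (OK_mul hOK (OK_deriv OKg')); try exact: (OK_mul OKh' OKg').
  rewrite !eval_mul //; try exact: OK_deriv.
  by rewrite g_eval // hper subrr hx0 mulr0 mul0r addr0 add0r.
have noboth : forall x, v x < 1 -> ps_eval v h x = 0 -> dyn v f N' x != x.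
  move=> x hx hx0; apply/negP => /eqP hper.
  by move: (hder x (conj hx hper)); rewrite deriv // eqxx.
have [rs [srs hroot hsmall hprod]] := weier Hv Hc hOK hw.
have per_rs : forall x, x \in rs -> dyn v f N x = x.
  move=> x xrs; apply/eqP; rewrite -subr_eq0 evmul ?hsmall //.
  by rewrite ((hroot x (hsmall x xrs)).2 xrs) mul0r.
have rs_n0 : forall x, x \in rs -> x != 0.
  move=> x xrs; apply/negP => /eqP x0.
  have hx0 := (hroot x (hsmall x xrs)).2 xrs.
  by move: (noboth x (hsmall x xrs) hx0); rewrite x0 dyn0 eqxx.
have minper : forall x, x \in rs -> min_period v f N x.
  move=> x xrs; have xs := hsmall x xrs.
  have [k [mk kN]] := minper_exists xs N0 (per_rs x xrs).
  have qk := minper_res mk (rs_n0 x xrs).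
  have kq : k = (q * (k %/ q))%N by rewrite mulnC divnK.
  have jd : (k %/ q %| p ^ n)%N by rewrite -(@dvdn_pmul2l q _ _ q0) -kq.
  case/(dvdn_pfactor (k %/ q) n pp): jd => e en je.
  case: (ltnP e n) => en'.
    have kN' : (k %| N')%N.
      by rewrite kq je dvdn_pmul2l // dvdn_exp2l // -ltnS prednK.
    case/dvdnP: kN' => t ht.
    have hk : dyn v f k x = x by case: mk.
    have := per_mult t hk; rewrite -ht => hper.
    have hx0 := (hroot x xs).2 xrs.
    by move: (noboth x xs hx0); rewrite hper eqxx.
  have -> : N = k by rewrite kq je (_ : e = n) //; apply/eqP; rewrite eqn_leq en en'.
  exact: mk.
have r_in : nth 0 rs 0 \in rs by apply: mem_nth; rewrite srs.
set r := nth 0 rs 0 in r_in.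
have mr := minper r r_in.
have rs_char : forall y, v y < 1 -> dyn v f N y = y -> dyn v f N' y != y -> y \in rs.
  move=> y hy hN hN'; apply/(hroot y hy).
  have := evmul y hy; rewrite hN subrr => /esym/eqP; rewrite mulf_eq0.
  by rewrite subr_eq0 (negbTE hN') orbF => /eqP.
have orb : forall j, (j < N)%N -> dyn v f j r \in rs.
  move=> j _; have hy := dyn_small j (hsmall r r_in).
  apply: rs_char => //; first by rewrite per_commute (per_rs r r_in).
  apply/negP => /eqP hper.
  have : dyn v f N' r = r.
    apply: (iter_cancel (v := v) (f := f) (j := j) N0).
    - by rewrite per_commute (per_rs r r_in).
    - exact: per_rs.
    - by rewrite per_commute hper.
  by case: mr => _ _ _ /(_ N'); rewrite N'0 N'N => /(_ isT).
have inorb : forall w, min_period v f N w -> exists k, w = dyn v f k r.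
  move=> w mw; apply: (orbit_fill mr orb srs).
  case: mw => hw0 _ hwN hmin; apply: rs_char => //.
  by apply/negP => /eqP; apply: hmin; rewrite N'0 N'N.
split; first by exists r.
move=> w mw; have [j ->] := inorb w mw.
rewrite dyn_iso ?hsmall //.
have lamN' : lam ^+ N' != 1.
  apply/negP => /eqP l1.
  have hp0 : periodic_pt v f N' 0 by split; [rewrite v0 ltr01 | exact: dyn0].
  move: (hder 0 hp0); rewrite eval0; last exact: OK_deriv (OK_iter N).
  by rewrite /psderiv mulr1n iter1 /N pnS mulnA exprM -/N' l1 expr1n eqxx.
have h0e : h 0%N * (lam ^+ N' - 1) = lam ^+ N - 1.
  have := congr1 (fun a => a 1%N) hmul'; rewrite /= /psmul big_ord_recr big_ord1 /=.
  by rewrite g0 mulr0 addr0 !g1.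
apply: powR_root; [exact: B.vge0 | exact: N0 |].
have vn0 : v (lam ^+ N' - 1) != 0 by rewrite B.v_eq0 // subr_eq0.
rewrite -h0e vM mulfK // hprod -srs; apply: prod_const => x xrs.
have [k ->] := orbit_fill mr orb srs xrs.
by rewrite dyn_iso ?hsmall.
Qed.

End Main.

End H.
Import H.

Theorem proposition5p1 (R : realType) (K : closedFieldType) (v : K -> R)
  (p q : nat) (lam : K) (f : pser K) :
  ultra_abs v -> nontrivial_abs v -> complete_abs v ->
  residue_char v p ->
  (0 < q)%N -> ~~ (p %| q)%N ->
  v lam = 1 -> residue_order v lam q ->
  f 0%N = 0 -> f 1%N = lam -> ps_in_OK v f ->
  (* (1) *)
  (wideg_is v (pssub (psiter f q) (@psX K)) q.+1 -> lam ^+ q != 1 ->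
     (exists w0, min_period v f q w0 /\ w0 != 0 /\
        forall w, min_period v f q w -> w != 0 -> exists k, w = dyn v f k w0) /\
     (forall w, min_period v f q w -> w != 0 ->
        v w = powR (v (lam ^+ q - 1)) (q%:R^-1))) /\
  (* (2) *)
  (forall n : nat, (1 <= n)%N ->
     (exists h : pser K,
        ps_in_OK v h /\
        (exists i, pssub (psiter f (q * p ^ n.-1)) (@psX K) i != 0) /\
        psmul h (pssub (psiter f (q * p ^ n.-1)) (@psX K))
          = pssub (psiter f (q * p ^ n)) (@psX K) /\
        wideg_is v h (q * p ^ n)) ->
     (forall z0, periodic_pt v f (q * p ^ n.-1) z0 ->
        ps_eval v (psderiv (psiter f (q * p ^ n))) z0 != 1) ->
     (exists z0, min_period v f (q * p ^ n) z0 /\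
        forall w, min_period v f (q * p ^ n) w -> exists k, w = dyn v f k z0) /\
     (forall z0, min_period v f (q * p ^ n) z0 ->
        v z0 = powR (v (lam ^+ (q * p ^ n) - 1) / v (lam ^+ (q * p ^ n.-1) - 1))
                    ((q * p ^ n)%:R^-1))).
Proof.
move=> Hv _ Hc [pp _] q0 _ vlam hres hf0 hf1 fOK.
split.
  move=> hw hlq; exact: (part1 Hv Hc hf0 hf1 fOK vlam q0 hres hw hlq).
move=> n n1 hh hder; exact: (part2 Hv Hc hf0 hf1 fOK vlam q0 hres pp n1 hh hder).
Qed.
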